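(* Let $n\ge 1$ and let $M$ be an $R[n]$-module. Then $M$ is isomorphic, as an $R[n]$-module, to a neural ring $R_\mathcal C$ for some code $\mathcal C\subseteq\{0,1\}^n$ if and only if $M$ has an $\mathbb F_2$-basis $\rho_1,\dots,\rho_d$ such that: (1) for all $i\in[n]$ and $j\in[d]$, $x_i\cdot\rho_j\in\{\rho_j,0\}$; (2) for all distinct $j,k\in[d]$ there exists at least one $i\in[n]$ such that exactly one of $x_i\cdot\rho_j$ and $x_i\cdot\rho_k$ is $0$.
   Context: A neural code on $n$ neurons is a subset $\mathcal C\subseteq\{0,1\}^n$. Its ideal is $I_\mathcal C=\{f\in\mathbb F_2[x_1,\dots,x_n]: f(c)=0 \text{ for all } c\in\mathcal C\}$ and its neural ring is $R_\mathcal C=\mathbb F_2[x_1,\dots,x_n]/I_\mathcal C$, identified with the ring of all functions $\mathcal C\to\{0,1\}=\mathbb F_2$. Write $R[n]=\mathbb F_2[x_1,\dots,x_n]/\langle x_i^2-x_i : i\in[n]\rangle$, the neural ring of the full code $\{0,1\}^n$. For $\mathcal C\subseteq\{0,1\}^n$, $R_\mathcal C$ is an $R[n]$-module via $(r\cdot f)(c)=r(c)f(c)$ for $c\in\mathcal C$. *)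

(* Defs.v *)
From HB Require Import structures.
From mathcomp Require Import all_boot all_algebra.
Set Implicit Arguments. Unset Strict Implicit. Unset Printing Implicit Defensive.
Import GRing.Theory.
Local Open Scope ring_scope.

Definition cube (n : nat) : finType := {ffun 'I_n -> bool}.

(* R[n] = F_2[x_1..x_n]/<x_i^2 - x_i>, identified (as in the paper) with the
   neural ring of the full code {0,1}^n, i.e. the ring of all functions
   {0,1}^n -> F_2 under pointwise operations. *)
Definition Rn (n : nat) : pzRingType := {ffun cube n -> 'F_2}.

(* The class of the variable x_i in R[n]: the coordinate function c |-> c_i. *)
Definition xvar (n : nat) (i : 'I_n) : Rn n := [ffun c : cube n => (c i)%:R].

Definition cst (n : nat) (a : 'F_2) : Rn n := [ffun _ : cube n => a].

(* The neural ring R_C of a code C ⊆ {0,1}^n: all functions C -> F_2. *)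
Definition neural_ring (n : nat) (C : {set cube n}) :=
  {ffun {c : cube n | c \in C} -> 'F_2}.

Definition nr_act (n : nat) (C : {set cube n}) (r : Rn n)
  (f : neural_ring C) : neural_ring C := [ffun c => r (val c) * f c].

Definition iso_to_neural_ring (n : nat) (M : lmodType (Rn n))
  (C : {set cube n}) : Prop :=
  exists phi : M -> neural_ring C,
    [/\ bijective phi,
        (forall u v : M, phi (u + v) = phi u + phi v) &
        (forall (r : Rn n) (u : M), phi (r *: u) = nr_act r (phi u))].

(* rho : 'I_d -> M is an F_2-basis of M (F_2 acting through the constants
   of R[n]): every element of M is uniquely an F_2-linear combination. *)
Definition F2_basis (n : nat) (M : lmodType (Rn n)) (d : nat)
  (rho : 'I_d -> M) : Prop :=
  forall m : M, exists! a : {ffun 'I_d -> 'F_2},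
    m = \sum_(j < d) cst n (a j) *: rho j.

(* Main.v *)
Require Import Defs.
From HB Require Import structures.
From mathcomp Require Import all_boot all_algebra.
Import GRing.Theory.
Local Open Scope ring_scope.

Lemma RmulE n (r s : Rn n) c : (r * s) c = r c * s c.
Proof. by rewrite /GRing.mul /= ffunE. Qed.
Lemma RaddE n (r s : Rn n) c : (r + s) c = r c + s c.
Proof. by rewrite ffunE. Qed.
Lemma RoneE n c : (1 : Rn n) c = 1.
Proof. by rewrite ffunE. Qed.
Lemma RzeroE n c : (0 : Rn n) c = 0.
Proof. by rewrite ffunE. Qed.
Lemma RoppE n (r : Rn n) c : (- r) c = - r c.
Proof. by rewrite ffunE. Qed.

Lemma cst0 n : cst n 0 = 0.
Proof. by apply/ffunP => c; rewrite !ffunE. Qed.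
Lemma cst1 n : cst n 1 = 1.
Proof. by apply/ffunP => c; rewrite !ffunE. Qed.
Lemma cstD n a b : cst n (a + b) = cst n a + cst n b.
Proof. by apply/ffunP => c; rewrite !ffunE. Qed.
Lemma cstN n a : cst n (- a) = - cst n a.
Proof. by apply/ffunP => c; rewrite !ffunE. Qed.
Lemma cstM n a b : cst n (a * b) = cst n a * cst n b.
Proof. by apply/ffunP => c; rewrite RmulE !ffunE. Qed.
Lemma cst_comm n (r : Rn n) a : r * cst n a = cst n a * r.
Proof. by apply/ffunP => c; rewrite !RmulE mulrC. Qed.

Lemma scale_cstA n (M : lmodType (Rn n)) a b (v : M) :
  cst n a *: (cst n b *: v) = cst n (a * b) *: v.
Proof. by rewrite scalerA cstM. Qed.
Lemma scale_comm n (M : lmodType (Rn n)) r a (v : M) :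
  r *: (cst n a *: v) = cst n a *: (r *: v).
Proof. by rewrite !scalerA cst_comm. Qed.

Lemma Rprod_eval n (I : finType) (F : I -> Rn n) c :
  (\prod_i F i) c = \prod_i F i c.
Proof.
apply: (big_rec2 (fun (x : Rn n) y => x c = y)); first exact: RoneE.
by move=> i x y _ <-; rewrite RmulE.
Qed.

Definition delta n (c : cube n) : Rn n :=
  \prod_(i < n) (if c i then xvar i else 1 - xvar i).

Arguments delta {n}.

Lemma deltaE n (c c0 : cube n) : delta c c0 = (c == c0)%:R.
Proof.
rewrite /delta Rprod_eval.
case: (pickP (fun i => c i != c0 i)) => [i Hi|H].
  have -> : (c == c0) = false.
    by apply/negbTE; apply/eqP => E; move: Hi; rewrite E eqxx.
  rewrite (bigD1 i) //=.
  have Ex : forall j, xvar j c0 = (c0 j)%:R by move=> j; rewrite ffunE.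
  move: Hi; case: (c i) => /=; rewrite ?RaddE ?RoppE ?RoneE Ex;
    case: (c0 i) => //= _; by rewrite ?subrr mul0r.
have -> : c = c0.
  by apply/ffunP => i; apply/eqP; move: (H i) => /= /negbFE.
rewrite eqxx big1 // => i _.
have Ex : forall j, xvar j c0 = (c0 j)%:R by move=> j; rewrite ffunE.
case E: (c0 i) => /=; rewrite ?RaddE ?RoppE ?RoneE Ex E //.
by rewrite subr0.
Qed.

Lemma action_eval n (M : lmodType (Rn n)) (v : M) (c : cube n)
  (hx : forall i, xvar i *: v = cst n ((c i)%:R) *: v) (r : Rn n) :
  r *: v = cst n (r c) *: v.
Proof.
pose P := fun r : Rn n => r *: v = cst n (r c) *: v.
have P1 : P 1 by rewrite /P RoneE cst1 scale1r.
have P0 : P 0 by rewrite /P RzeroE cst0 !scale0r.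
have PM : forall r s, P r -> P s -> P (r * s).
  move=> r1 s1 Hr Hs; rewrite /P -scalerA Hs scale_comm Hr scale_cstA RmulE.
  by rewrite mulrC.
have PD : forall r s, P r -> P s -> P (r + s).
  by move=> r1 s1 Hr Hs; rewrite /P scalerDl Hr Hs RaddE cstD scalerDl.
have PN : forall r, P r -> P (- r).
  by move=> r1 Hr; rewrite /P scaleNr Hr RoppE cstN scaleNr.
have Px : forall i, P (xvar i) by move=> i; rewrite /P hx /xvar ffunE.
have Pc : forall a, P (cst n a) by move=> a; rewrite /P ffunE.
have Pd : forall c', P (delta c').
  move=> c'; apply: (big_ind P P1 PM) => i _.
  by case: (c' i); [apply: Px | apply: PD P1 (PN _ (Px i))].
have -> : r = \sum_(c' : cube n) cst n (r c') * delta c'.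
  apply/ffunP => c0; rewrite sum_ffunE (bigD1 c0) //= big1.
    by rewrite addr0 RmulE deltaE eqxx mulr1 ffunE.
  move=> c' /negbTE Hc; by rewrite RmulE deltaE Hc mulr0.
apply: (big_ind P P0 PD) => c' _; apply: PM; [apply: Pc | apply: Pd].
Qed.


Lemma backward n (M : lmodType (Rn n)) (d : nat) (rho : 'I_d -> M) :
  F2_basis rho ->
  (forall (i : 'I_n) (j : 'I_d), xvar i *: rho j = rho j \/ xvar i *: rho j = 0) ->
  (forall j k : 'I_d, j != k ->
     exists i : 'I_n, (xvar i *: rho j == 0) (+) (xvar i *: rho k == 0)) ->
  exists C : {set cube n}, iso_to_neural_ring M C.
Proof.
move=> B H1 H2.
pose code := fun j : 'I_d => [ffun i : 'I_n => xvar i *: rho j != 0] : cube n.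
have hx : forall j i, xvar i *: rho j = cst n ((code j i)%:R) *: rho j.
  move=> j i; rewrite /code ffunE.
  case: (H1 i j) => ->.
    case: eqP => [->|_] /=; first by rewrite scaler0.
    by rewrite cst1 scale1r.
  by rewrite eqxx /= cst0 scale0r.
have act : forall j r, r *: rho j = cst n (r (code j)) *: rho j.
  by move=> j r; apply: action_eval.
have code_inj : forall j k, (code j == code k) = (j == k).
  move=> j k; case: (eqVneq j k) => [->|Hjk]; first by rewrite eqxx.
  apply/negbTE/eqP => E; case: (H2 j k Hjk) => i.
  have : code j i = code k i by rewrite E.
  by rewrite /code !ffunE; case: eqP; case: eqP.
pose C := [set code j | j : 'I_d].
have memC : forall j, code j \in C by move=> j; apply: imset_f.
pose cj := fun j => exist (fun c => c \in C) (code j) (memC j).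
pose psi := fun f : neural_ring C => \sum_(j < d) cst n (f (cj j)) *: rho j.
have psi_add : forall f g, psi (f + g) = psi f + psi g.
  move=> f g; rewrite /psi -big_split; apply: eq_bigr => j _.
  by rewrite ffunE cstD scalerDl.
have psi_lin : forall r f, psi (nr_act r f) = r *: psi f.
  move=> r f; rewrite /psi scaler_sumr; apply: eq_bigr => j _.
  by rewrite scale_comm (act j r) scale_cstA ffunE /= mulrC.
have psi_inj : forall f g, psi f = psi g -> f = g.
  move=> f g E.
  have [a [_ Ua]] := B (psi f).
  have Ef : [ffun j => f (cj j)] = a.
    symmetry; apply: Ua; rewrite /psi; apply: eq_bigr => j _; by rewrite ffunE.
  have Eg : [ffun j => g (cj j)] = a.
    symmetry; apply: Ua; rewrite E /psi; apply: eq_bigr => j _; by rewrite ffunE.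
  apply/ffunP => -[c Hc].
  case/imsetP: (Hc) => j _ Ec.
  have -> : exist (fun c => c \in C) c Hc = cj j by apply: val_inj.
  have := congr1 (fun h : {ffun 'I_d -> 'F_2} => h j) Ef.
  have := congr1 (fun h : {ffun 'I_d -> 'F_2} => h j) Eg.
  by rewrite /= !ffunE => -> ->.
have psi_surj : forall m, exists f, psi f = m.
  move=> m; have [a [Ea _]] := B m.
  exists [ffun s : {c : cube n | c \in C} => \sum_(j | code j == val s) a j].
  rewrite Ea /psi; apply: eq_bigr => j _; rewrite ffunE /=.
  congr (cst n _ *: _).
  rewrite (eq_bigl (fun k => k == j)) ?big_pred1_eq // => k.
pose phi := fun m : M => odflt 0 [pick f | psi f == m].
have psi_phi : forall m, psi (phi m) = m.
  move=> m; rewrite /phi; case: pickP => [f /eqP //|H].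
  by have [f Ef] := psi_surj m; move: (H f); rewrite Ef eqxx.
exists C, phi; split.
- exists psi => [m|f]; first exact: psi_phi.
  by apply: psi_inj; rewrite psi_phi.
- by move=> u v; apply: psi_inj; rewrite psi_add !psi_phi.
- by move=> r u; apply: psi_inj; rewrite psi_lin !psi_phi.
Qed.


Lemma forward n (M : lmodType (Rn n)) (C : {set cube n}) :
  iso_to_neural_ring M C ->
  exists (d : nat) (rho : 'I_d -> M),
     [/\ F2_basis rho,
         (forall (i : 'I_n) (j : 'I_d),
            xvar i *: rho j = rho j \/ xvar i *: rho j = 0) &
         (forall j k : 'I_d, j != k ->
            exists i : 'I_n,
              (xvar i *: rho j == 0) (+) (xvar i *: rho k == 0))].
Proof.
move=> [phi [[g phig gphi] phiD phiZ]].
pose S : finType := {c : cube n | c \in C}.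
have phi0 : phi 0 = 0.
  have H := phiD 0 0; rewrite addr0 in H.
  by apply: (addrI (phi 0)); rewrite addr0 -H.
have phi_sum : forall (d : nat) (F : 'I_d -> M),
    phi (\sum_(j < d) F j) = \sum_(j < d) phi (F j).
  move=> d F; apply: (big_rec2 (fun x y => phi x = y)); first exact: phi0.
  by move=> j x y _ <-; rewrite phiD.
pose del := fun s : S => [ffun t : S => ((t == s)%:R : 'F_2)] : neural_ring C.
pose e := fun j : 'I_#|S| => (enum_val j : S).
pose rho := fun j => g (del (e j)).
have phi_rho : forall j, phi (rho j) = del (e j) by move=> j; rewrite /rho gphi.
have phi_inj : injective phi := can_inj phig.
have phi_sc : forall r j, phi (r *: rho j) = [ffun t : S => r (val t) * (t == e j)%:R].
  by move=> r j; rewrite phiZ phi_rho /nr_act; apply/ffunP => t; rewrite !ffunE.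
have phi_lc : forall b : {ffun 'I_#|S| -> 'F_2},
    phi (\sum_j cst n (b j) *: rho j) = [ffun t => b (enum_rank t)].
  move=> b; apply/ffunP => t; rewrite phi_sum sum_ffunE ffunE.
  rewrite (bigD1 (enum_rank t)) //= big1.
    by rewrite phi_sc ffunE /e enum_rankK eqxx ffunE mulr1 addr0.
  move=> j Hj; rewrite phi_sc ffunE; case: eqP => [Et|_]; last by rewrite mulr0.
  by move: Hj; rewrite Et /e enum_valK eqxx.
have xact : forall i j, xvar i *: rho j = if val (e j) i then rho j else 0.
  move=> i j; apply: phi_inj; rewrite phi_sc.
  case E: (val (e j) i); rewrite ?phi0 ?phi_rho; apply/ffunP => t; rewrite !ffunE;
    case: eqP => [->|_]; rewrite ?E ?mulr0 ?mulr1 //.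
have rho_nz : forall j, rho j != 0.
  move=> j; apply/eqP => E; have := congr1 phi E.
  rewrite phi_rho phi0 => /(congr1 (fun h : neural_ring C => h (e j))).
  by rewrite !ffunE eqxx.
exists #|S|, rho; split.
- move=> m; exists [ffun j => phi m (e j)]; split.
    apply: phi_inj; rewrite phi_lc; apply/ffunP => t.
    by rewrite !ffunE /e enum_rankK.
  move=> b Eb; apply/ffunP => j; rewrite ffunE Eb phi_lc ffunE /e enum_valK.
  by [].
- by move=> i j; rewrite xact; case: ifP; [left | right].
- move=> j k Hjk.
  have Hne : val (e j) != val (e k).
    apply/eqP => /val_inj /(congr1 enum_rank); rewrite /e !enum_valK => E.
    by move: Hjk; rewrite E eqxx.
  case: (pickP (fun i => val (e j) i != val (e k) i)) => [i Hi|H].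
    exists i; rewrite !xact.
    move: Hi; case: (val (e j) i); case: (val (e k) i) => //= _;
      by rewrite eqxx (negbTE (rho_nz _)).
  have E : val (e j) = val (e k).
    by apply/ffunP => i; apply/eqP; move: (H i) => /= /negbFE.
  by move: Hne; rewrite E eqxx.
Qed.

Theorem theorem2 (n : nat) (hn : (1 <= n)%N) (M : lmodType (Rn n)) :
  (exists C : {set cube n}, iso_to_neural_ring M C) <->
  (exists (d : nat) (rho : 'I_d -> M),
     [/\ F2_basis rho,
         (forall (i : 'I_n) (j : 'I_d),
            xvar i *: rho j = rho j \/ xvar i *: rho j = 0) &
         (forall j k : 'I_d, j != k ->
            exists i : 'I_n,
              (xvar i *: rho j == 0) (+) (xvar i *: rho k == 0))]).
Proof.
split.
- by move=> [C HC]; apply: forward HC.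
- by move=> [d [rho [B H1 H2]]]; apply: backward B H1 H2.
Qed.
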